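(* For every positive integer $n$, $\mathrm{ex}(n,K_3,T_1)=\mathrm{ex}(n,K_3,P_4)=\mathcal{N}(K_3,D(3,n))=\lfloor n/3\rfloor$.
   Context: $T_1$ (the paw) is a triangle together with one further vertex joined to exactly one vertex of the triangle; $P_4$ is the path on $4$ vertices. $D(3,n)$ is the graph on $n$ vertices consisting of $\lfloor n/3\rfloor$ vertex-disjoint triangles and a clique on the remaining vertices. For graphs $H,G$, $\mathcal{N}(H,G)$ is the number of subgraphs of $G$ isomorphic to $H$, and $\mathrm{ex}(n,H,F)$ is the maximum of $\mathcal{N}(H,G)$ over $F$-free graphs $G$ on $n$ vertices. *)

(* Defs.v *)
From mathcomp Require Import all_boot all_order.
Set Implicit Arguments. Unset Strict Implicit. Unset Printing Implicit Defensive.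

Definition is_simple (T : finType) (e : rel T) : bool :=
  [forall x, ~~ e x x] && [forall x, forall y, e x y == e y x].

(* injective homomorphisms (embeddings as not-necessarily-induced subgraphs) *)
Definition is_emb (TH TG : finType) (eH : rel TH) (eG : rel TG)
  (f : {ffun TH -> TG}) : bool :=
  injectiveb f && [forall u, forall v, eH u v ==> eG (f u) (f v)].

(* the subgraphs of G isomorphic to H: images (vertex set, edge set) of
   embeddings of H into G *)
Definition copies (TH TG : finType) (eH : rel TH) (eG : rel TG)
  : {set ({set TG} * {set {set TG}})} :=
  [set (f @: [set: TH], [set [set f uv.1; f uv.2] | uv in [set uv : TH * TH | eH uv.1 uv.2]])
     | f : {ffun TH -> TG} & is_emb eH eG f].

Definition numSub (TH TG : finType) (eH : rel TH) (eG : rel TG) : nat :=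
  #|copies eH eG|.

Definition free (TF TG : finType) (eF : rel TF) (eG : rel TG) : bool :=
  numSub eF eG == 0.

Definition adj n (g : {ffun 'I_n * 'I_n -> bool}) : rel 'I_n :=
  fun x y => g (x, y).

Definition exGen (n : nat) (TH TF : finType) (eH : rel TH) (eF : rel TF) : nat :=
  \max_(g : {ffun 'I_n * 'I_n -> bool} | is_simple (adj g) && free eF (adj g))
     numSub eH (adj g).

Definition K3 : rel 'I_3 := fun x y => x != y.

(* the paw T_1 on 'I_4: triangle 0,1,2 and vertex 3 joined to 0 *)
Definition paw_edge (a b : nat) : bool :=
  [|| (a == 0) && (b == 1), (a == 1) && (b == 2), (a == 0) && (b == 2)
    | (a == 0) && (b == 3)].
Definition paw : rel 'I_4 := fun x y => paw_edge x y || paw_edge y x.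

Definition P4 : rel 'I_4 := fun x y => (x.+1 == y :> nat) || (y.+1 == x :> nat).

(* D(3,n) on 'I_n: blocks {3k,3k+1,3k+2} are triangles (k < n/3); the
   remaining n mod 3 vertices form the last block, which is a clique. *)
Definition D3 (n : nat) : rel 'I_n :=
  fun x y => (x != y) && (x %/ 3 == y %/ 3).
Arguments D3 n : clear implicits.
Arguments exGen n {TH TF} eH eF.

(* Main.v *)
Require Import Defs.
From mathcomp Require Import all_boot all_order.
From mathcomp Require Import zify.
From Stdlib Require Import FunctionalExtensionality.
Set Implicit Arguments. Unset Strict Implicit. Unset Printing Implicit Defensive.

Lemma emb_contra (TH T : finType) (eH : rel TH) (e : rel T) (f : {ffun TH -> T}) :
  is_emb eH e f -> numSub eH e = 0 -> False.
Proof.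
move=> hf /eqP; rewrite cards_eq0 => /eqP hc.
have : (f @: [set: TH], [set [set f uv.1; f uv.2] | uv in [set uv : TH * TH | eH uv.1 uv.2]])
   \in copies eH e by apply/imsetP; exists f; rewrite ?inE.
by rewrite hc inE.
Qed.

Lemma edges_eq (T : finType) (f : {ffun 'I_3 -> T}) : injective f ->
  [set [set f uv.1; f uv.2] | uv in [set uv : 'I_3 * 'I_3 | K3 uv.1 uv.2]] =
  [set s : {set T} | (s \subset f @: setT) && (#|s| == 2)].
Proof.
move=> fi; apply/setP => s; rewrite inE; apply/imsetP/andP.
- case=> [[u v]]; rewrite inE /K3 /= => huv ->; split.
    by apply/subsetP => x; rewrite !inE => /orP[]/eqP->; apply: imset_f.
  by rewrite cards2 (inj_eq fi) huv.
- case=> /subsetP hs /cards2P [x [y [hxy hsE]]].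
  have /imsetP[u _ hu] : x \in f @: setT by apply: hs; rewrite hsE set21.
  have /imsetP[v _ hv] : y \in f @: setT by apply: hs; rewrite hsE set22.
  exists (u, v); last by rewrite hsE hu hv.
  rewrite inE /K3 /=; apply/eqP => huv; move: hxy; by rewrite hu hv huv eqxx.
Qed.

Section Bound.
Variables (T : finType) (e : rel T).
Hypothesis H : forall a b c w, a != b -> b != c -> a != c -> e a b -> e b c -> e a c ->
  w != a -> w != b -> w != c -> e a w -> False.

Lemma tri_prop (f : {ffun 'I_3 -> T}) : is_emb K3 e f ->
  #|f @: setT| = 3 /\ forall x y, x \in f @: setT -> y \in f @: setT -> x != y -> e x y.
Proof.
move=> hf; have /andP[/injectiveP fi /forallP he] := hf; split.
  by rewrite card_imset // cardsT card_ord.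
move=> x y /imsetP[u _ ->] /imsetP[v _ ->] hne.
have := he u => /forallP /(_ v) /implyP; apply; rewrite /K3.
by apply: contraNneq hne => ->.
Qed.

Lemma tri_bound : 3 * numSub K3 e <= #|T|.
Proof.
set C := copies K3 e; set P := [set p.1 | p in C].
have cardP : #|P| = #|C|.
  rewrite card_in_imset // => p q /imsetP[f1]; rewrite inE => hf1 ->.
  move=> /imsetP[f2]; rewrite inE => hf2 -> /=.
  have /andP[/injectiveP fi1 _] := hf1; have /andP[/injectiveP fi2 _] := hf2.
  by rewrite (edges_eq fi1) (edges_eq fi2) => ->.
have PP : forall B, B \in P -> #|B| = 3 /\
    forall x y, x \in B -> y \in B -> x != y -> e x y.
  by move=> B /imsetP[p /imsetP[f]]; rewrite inE => hf -> ->; apply: tri_prop.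
have tP : trivIset P.
  apply/trivIsetP => B1 B2 h1 h2 hne.
  have [c1 t1] := PP _ h1; have [c2 t2] := PP _ h2.
  rewrite -setI_eq0; apply/eqP/setP => x; rewrite !inE; apply/negbTE/andP => -[x1 x2].
  have : ~~ (B2 \subset B1).
    by apply: contra hne => sub; rewrite eq_sym eqEcard sub c1 c2 leqnn.
  case/subsetPn => y y2 yn1.
  have : #|B1 :\ x| == 2 by move: c1; rewrite (cardsD1 x) x1 add1n => -[->].
  case/cards2P => b [c [hbc hB]].
  have : b \in B1 :\ x by rewrite hB set21.
  rewrite !inE => /andP[bx b1].
  have : c \in B1 :\ x by rewrite hB set22.
  rewrite !inE => /andP[cx c1'].
  have yx : y != x by apply: contraNneq yn1 => ->.
  have yb : y != b by apply: contraNneq yn1 => ->.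
  have yc : y != c by apply: contraNneq yn1 => ->.
  apply: (H (a:=x) (b:=b) (c:=c) (w:=y)) => //; first by rewrite eq_sym.
  - by rewrite eq_sym.
  - by apply: t1 => //; rewrite eq_sym.
  - by apply: t1.
  - by apply: t1 => //; rewrite eq_sym.
  - by apply: t2 => //; rewrite eq_sym.
have := eqP tP.
rewrite (eq_bigr (fun _ => 3)); last by move=> B /PP [].
rewrite sum_nat_const cardP => h.
by rewrite /numSub -/C mulnC h max_card.
Qed.
End Bound.
Lemma four_emb (T : finType) (e : rel T) (eH : rel 'I_4) (a b c w : T) :
  a != b -> b != c -> a != c -> w != a -> w != b -> w != c ->
  (forall u v : 'I_4, eH u v -> e (nth a [:: a; b; c; w] u) (nth a [:: a; b; c; w] v)) ->
  is_emb eH e [ffun i : 'I_4 => nth a [:: a; b; c; w] i].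
Proof.
move=> hab hbc hac hwa hwb hwc he; apply/andP; split.
  apply/injectiveP => u v; rewrite !ffunE.
  case: u v => [[|[|[|[|u]]]] hu] [[|[|[|[|v]]]] hv] //= E; try exact: val_inj;
  by move: hab hbc hac hwa hwb hwc; rewrite E eqxx.
apply/forallP => u; apply/forallP => v; apply/implyP => h; rewrite !ffunE; exact: he.
Qed.

Lemma simple_sym (T : finType) (e : rel T) : is_simple e -> forall x y, e x y = e y x.
Proof. by case/andP => _ /forallP h x y; move: (h x) => /forallP /(_ y) /eqP. Qed.

Lemma paw_H (T : finType) (e : rel T) : is_simple e -> numSub paw e = 0 ->
  forall a b c w, a != b -> b != c -> a != c -> e a b -> e b c -> e a c ->
  w != a -> w != b -> w != c -> e a w -> False.
Proof.
move=> hs h0 a b c w hab hbc hac eab ebc eac hwa hwb hwc eaw.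
have es := simple_sym hs.
apply: (emb_contra (f := [ffun i : 'I_4 => nth a [:: a; b; c; w] i]) _ h0).
apply: four_emb => // u v.
case: u v => [[|[|[|[|u]]]] hu] [[|[|[|[|v]]]] hv] //=; rewrite /paw /paw_edge /=;
  by rewrite ?eab ?ebc ?eac ?eaw // es ?eab ?ebc ?eac ?eaw.
Qed.

Lemma P4_H (T : finType) (e : rel T) : is_simple e -> numSub P4 e = 0 ->
  forall a b c w, a != b -> b != c -> a != c -> e a b -> e b c -> e a c ->
  w != a -> w != b -> w != c -> e a w -> False.
Proof.
move=> hs h0 a b c w hab hbc hac eab ebc eac hwa hwb hwc eaw.
have es := simple_sym hs.
apply: (emb_contra (f := [ffun i : 'I_4 => nth w [:: w; a; b; c] i]) _ h0).
apply/andP; split.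
  apply/injectiveP => u v; rewrite !ffunE.
  case: u v => [[|[|[|[|u]]]] hu] [[|[|[|[|v]]]] hv] //= E; try exact: val_inj;
  by move: hab hbc hac hwa hwb hwc; rewrite E eqxx.
apply/forallP => u; apply/forallP => v; apply/implyP; rewrite !ffunE.
case: u v => [[|[|[|[|u]]]] hu] [[|[|[|[|v]]]] hv] //=; rewrite /P4 /=;
  by rewrite ?eab ?ebc ?eac ?eaw // es ?eab ?ebc ?eac ?eaw.
Qed.
Lemma D3_simple n : is_simple (D3 n).
Proof.
apply/andP; split; apply/forallP => x; first by rewrite /D3 eqxx.
apply/forallP => y; rewrite /D3 [x == y]eq_sym [x %/ 3 == _]eq_sym; exact: eqxx.
Qed.

Definition i0 : 'I_4 := @Ordinal 4 0 isT.
Definition i1 : 'I_4 := @Ordinal 4 1 isT.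
Definition i2 : 'I_4 := @Ordinal 4 2 isT.
Definition i3 : 'I_4 := @Ordinal 4 3 isT.

Lemma nofour n (f : {ffun 'I_4 -> 'I_n}) : injective f ->
  (f i1 : nat) %/ 3 = f i0 %/ 3 -> (f i2 : nat) %/ 3 = f i0 %/ 3 ->
  (f i3 : nat) %/ 3 = f i0 %/ 3 -> False.
Proof.
move=> fi.
have d : forall u v, u != v -> (f u : nat) <> f v.
  by move=> u v uv E; move/eqP: uv; apply; apply: fi; apply: val_inj.
move: (d i0 i1 isT) (d i0 i2 isT) (d i0 i3 isT) (d i1 i2 isT) (d i1 i3 isT) (d i2 i3 isT).
move: (nat_of_ord (f i0)) (nat_of_ord (f i1)) (nat_of_ord (f i2)) (nat_of_ord (f i3)).
move=> x0 x1 x2 x3; lia.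
Qed.

Lemma D3_free_gen n (eF : rel 'I_4) :
  (forall f : {ffun 'I_4 -> 'I_n}, (forall u v, eF u v -> (f u : nat) %/ 3 = f v %/ 3) ->
    [/\ (f i1 : nat) %/ 3 = f i0 %/ 3, (f i2 : nat) %/ 3 = f i0 %/ 3 &
        (f i3 : nat) %/ 3 = f i0 %/ 3]) ->
  numSub eF (D3 n) = 0.
Proof.
move=> hF; apply/eqP; rewrite cards_eq0; apply/eqP/setP => p; rewrite inE.
apply/negbTE/imsetP => -[f]; rewrite inE => /andP[/injectiveP fi /forallP he] _.
have E : forall u v, eF u v -> (f u : nat) %/ 3 = f v %/ 3.
  by move=> u v h; move: (he u) => /forallP /(_ v) /implyP /(_ h) /andP[_ /eqP].
by case: (hF f E) => h1 h2 h3; apply: (nofour fi h1 h2 h3).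
Qed.

Lemma D3_paw_free n : numSub paw (D3 n) = 0.
Proof.
apply: D3_free_gen => f E.
have e01 := E i0 i1 isT; have e12 := E i1 i2 isT; have e03 := E i0 i3 isT.
split; congruence.
Qed.

Lemma D3_P4_free n : numSub P4 (D3 n) = 0.
Proof.
apply: D3_free_gen => f E.
have e01 := E i0 i1 isT; have e12 := E i1 i2 isT; have e23 := E i2 i3 isT.
split; congruence.
Qed.

Lemma D3_lower m : m.+1 %/ 3 <= numSub K3 (D3 m.+1).
Proof.
pose F (k : 'I_(m.+1 %/ 3)) : {ffun 'I_3 -> 'I_m.+1} := [ffun i : 'I_3 => inord (3 * k + i)].
have FkE : forall k i, (F k i : nat) = 3 * k + i.
  move=> k i; rewrite ffunE inordK //.
  have := ltn_ord k; have := ltn_ord i; lia.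
have Femb : forall k, is_emb K3 (D3 m.+1) (F k).
  move=> k; apply/andP; split.
    apply/injectiveP => i j /(congr1 (@nat_of_ord _)); rewrite !FkE => h.
    apply: ord_inj; lia.
  apply/forallP => i; apply/forallP => j; apply/implyP => ij.
  rewrite /D3; apply/andP; split.
    apply: contra ij => /eqP /(congr1 (@nat_of_ord _)); rewrite !FkE => h.
    apply/eqP; apply: ord_inj; lia.
  rewrite !FkE; apply/eqP; have := ltn_ord i; have := ltn_ord j; lia.
pose C k := (F k @: [set: 'I_3],
  [set [set F k uv.1; F k uv.2] | uv in [set uv : 'I_3 * 'I_3 | K3 uv.1 uv.2]]).
have Cinj : injective C.
  move=> k k' /(congr1 fst) /= E.
  have : F k ord0 \in F k' @: setT by rewrite -E imset_f.
  case/imsetP => j _ /(congr1 (@nat_of_ord _)); rewrite !FkE => h.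
  apply: ord_inj; move: h; rewrite addn0; have := ltn_ord j; lia.
rewrite /numSub.
have <- : #|[set C k | k in [set: 'I_(m.+1 %/ 3)]]| = m.+1 %/ 3.
  by rewrite card_imset // cardsT card_ord.
apply: subset_leq_card; apply/subsetP => p /imsetP[k _ ->].
by apply/imsetP; exists (F k); rewrite ?inE.
Qed.

Theorem mainTheorem15 (n : nat) : 0 < n ->
  exGen n K3 paw = n %/ 3 /\ exGen n K3 P4 = n %/ 3 /\
  numSub K3 (D3 n) = n %/ 3.
Proof.
case: n => // m _.
pose gD := [ffun p : 'I_m.+1 * 'I_m.+1 => D3 m.+1 p.1 p.2].
have adjD : adj gD = D3 m.+1.
  apply: functional_extensionality => x; apply: functional_extensionality => y.
  by rewrite /adj ffunE.
have up : forall e : rel 'I_m.+1, (forall a b c w, a != b -> b != c -> a != c ->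
    e a b -> e b c -> e a c -> w != a -> w != b -> w != c -> e a w -> False) ->
    numSub K3 e <= m.+1 %/ 3.
  move=> e h; have := tri_bound h; rewrite card_ord; lia.
split; [|split].
- apply/eqP; rewrite eqn_leq; apply/andP; split.
    apply/bigmax_leqP => g /andP[hs /eqP hf]; apply: up; exact: paw_H hs hf.
  apply: leq_trans (D3_lower m) _.
  have := @leq_bigmax_cond _ (fun g => is_simple (adj g) && free paw (adj g))
    (fun g => numSub K3 (adj g)) gD.
  rewrite adjD; apply; by rewrite D3_simple /free D3_paw_free.
- apply/eqP; rewrite eqn_leq; apply/andP; split.
    apply/bigmax_leqP => g /andP[hs /eqP hf]; apply: up; exact: P4_H hs hf.
  apply: leq_trans (D3_lower m) _.
  have := @leq_bigmax_cond _ (fun g => is_simple (adj g) && free P4 (adj g))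
    (fun g => numSub K3 (adj g)) gD.
  rewrite adjD; apply; by rewrite D3_simple /free D3_P4_free.
- apply/eqP; rewrite eqn_leq D3_lower andbT; apply: up.
  exact: paw_H (D3_simple _) (D3_paw_free _).
Qed.
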